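(* A reflexive graph $G$ contains an invertible pair if and only if it contains a weak edge-asteroid.
   Context: A graph is reflexive if every vertex carries a loop; its edge set $E(G)$ contains all loops $vv$, and an ''edge'' $uu'$ may be a loop ($u=u'$). A walk $u_0u_1\dots u_t$ ($t\ge 1$) is a sequence of vertices with $u_ju_{j+1}\in E(G)$ for all $j$ (consecutive vertices may coincide); its edges are $u_ju_{j+1}$. $Z(G)$ is the set of ordered pairs $(u,v)$ of distinct vertices of $G$. For $(u,v),(u',v')\in Z(G)$, $(u,v)$ forces $(u',v')$, written $(u,v)\Lambda(u',v')$, if either $u=u'$ and $v=v'$, or $uu'\in E(G)$, $vv'\in E(G)$, $uv'\notin E(G)$ and $vu'\notin E(G)$. We write $(u,v)\sim(u',v')$ if there are walks $w_1\dots w_m$ and $z_1\dots z_m$ in $G$ with $(w_1,z_1)=(u,v)$, $(w_m,z_m)=(u',v')$ and $(w_j,z_j)\Lambda(w_{j+1},z_{j+1})$ for all $j$. An invertible pair is a pair of distinct vertices $u,v$ with $(u,v)\sim(v,u)$. For edges $uu'$, $vv'$ of $G$ with $\{u,u'\}\cap\{v,v'\}=\emptyset$, $uu'$ avoids $vv'$ if one of the following holds: (i) $u=u'$, $v=v'$, $uv\notin E(G)$; (ii) $u=u'$, $v\ne v'$, $uv\notin E(G)$ and $uv'\notin E(G)$; (iii) $u\ne u'$, $v=v'$, $uv\notin E(G)$ and $u'v\notin E(G)$; (iv) $u\ne u'$, $v\ne v'$, and $\{u,u',v,v'\}$ induces a $2K_2$, a $P_4$, or a $C_4$ in $G$. An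 edge avoids a walk if it avoids every edge of the walk. A weak edge-asteroid is a set of edges $x_0y_0,\dots,x_{2k}y_{2k}$ ($k\ge1$) such that for each $i$, $x_iy_i$ avoids some walk whose first edge is $x_{i+k}y_{i+k}$ and whose last edge is $x_{i+k+1}y_{i+k+1}$ (subscripts modulo $2k+1$). *)

(* Defs.v *)
(* Finite reflexive (undirected) graphs as a symmetric,
   reflexive boolean relation e on a finType T. *)
From mathcomp Require Import all_boot.
Set Implicit Arguments. Unset Strict Implicit. Unset Printing Implicit Defensive.

Section Defs.
Variable T : finType.
Variable e : rel T.

Definition Lam (p q : T * T) : bool :=
  [&& p.1 != p.2, q.1 != q.2 &
      (p == q) || [&& e p.1 q.1, e p.2 q.2, ~~ e p.1 q.2 & ~~ e p.2 q.1]].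

Definition walk_step (p q : T * T) : bool := [&& e p.1 q.1, e p.2 q.2 & Lam p q].

Definition sim (p q : T * T) : Prop :=
  exists s : seq (T * T), [/\ 0 < size s, path walk_step p s & last p s = q].

Definition invertible_pair (u v : T) : Prop := u != v /\ sim (u, v) (v, u).

(* walks u_0 u_1 ... u_t (t >= 1), represented by u_0 and s = [u_1;...;u_t] *)
Definition is_walk (x : T) (s : seq T) : bool := (0 < size s) && path e x s.
Definition walk_edges (x : T) (s : seq T) : seq (T * T) := zip (x :: s) s.
Definition first_edge (x : T) (s : seq T) : T * T := head (x, x) (walk_edges x s).
Definition last_edge (x : T) (s : seq T) : T * T := last (x, x) (walk_edges x s).

(* equality of (unordered) edges given by ordered representatives *)
Definition same_edge (a b : T * T) : bool := (a == b) || (a == (b.2, b.1)).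

Definition induces (S : {set T}) (H : rel 'I_4) : Prop :=
  exists f : 'I_4 -> T,
    [/\ injective f, [set f i | i in 'I_4] = S &
        forall i j : 'I_4, i != j -> e (f i) (f j) = H i j].

(* patterns: P4 = 0-1-2-3, C4 = 0-1-2-3-0, 2K2 = {01, 23} *)
Definition P4_pat : rel 'I_4 :=
  fun i j => ((i : nat) == j.+1) || ((j : nat) == i.+1).
Definition C4_pat : rel 'I_4 :=
  fun i j => P4_pat i j || (((i : nat) == 0) && ((j : nat) == 3))
                       || (((i : nat) == 3) && ((j : nat) == 0)).
Definition twoK2_pat : rel 'I_4 :=
  fun i j => P4_pat i j && ((i : nat) + j != 3).

Definition avoids (a b : T * T) : Prop :=
  let: (u, u') := a in let: (v, v') := b in
  [/\ e u u', e v v', [set u; u'] :&: [set v; v'] = set0 &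
   [\/ [/\ u = u', v = v' & ~~ e u v],
       [/\ u = u', v != v', ~~ e u v & ~~ e u v'],
       [/\ u != u', v = v', ~~ e u v & ~~ e u' v] |
       [/\ u != u', v != v' &
           let S := [set u; u'; v; v'] in
           [\/ induces S twoK2_pat, induces S P4_pat | induces S C4_pat]]]].

Definition avoids_walk (a : T * T) (x : T) (s : seq T) : Prop :=
  forall b, b \in walk_edges x s -> avoids a b.

Definition weak_edge_asteroid (k : nat) (x y : nat -> T) : Prop :=
  [/\ 1 <= k,
      forall i, i < k.*2.+1 -> e (x i) (y i) &
      forall i, i < k.*2.+1 ->
        let j := (i + k) %% k.*2.+1 in
        let j' := (i + k + 1) %% k.*2.+1 in
        exists (w0 : T) (ws : seq T),
          [/\ is_walk w0 ws,
              same_edge (first_edge w0 ws) (x j, y j),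
              same_edge (last_edge w0 ws) (x j', y j') &
              avoids_walk (x i, y i) w0 ws]].

End Defs.

(* Main.v *)
Require Import Defs.
From mathcomp Require Import all_boot.
From mathcomp Require Import zify.
Set Implicit Arguments. Unset Strict Implicit. Unset Printing Implicit Defensive.


Definition swp {T : Type} (z : T * T) : T * T := (z.2, z.1).

Lemma swpK {T : Type} (z : T * T) : swp (swp z) = z.
Proof. by case: z. Qed.

Lemma sim_trans (T : finType) (e : rel T) p q r : sim e p q -> sim e q r -> sim e p r.
Proof.
case=> s1 [H1 P1 L1] [s2 [H2 P2 L2]]; exists (s1 ++ s2); split.
- by rewrite size_cat (leq_trans H1) // leq_addr.
- by rewrite cat_path P1 L1.
- by rewrite last_cat L1.
Qed.

Lemma Lam_swp (T : finType) (e : rel T) (es : symmetric e) p q :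
  Lam e (swp p) (swp q) = Lam e p q.
Proof.
case: p q => [a b] [c d]; rewrite /Lam /swp /= [b == a]eq_sym [d == c]eq_sym.
have -> : ((b, a) == (d, c)) = ((a, b) == (c, d)) by rewrite !xpair_eqE andbC.
rewrite [e b c]es [e a d]es; by case: (e b d); case: (e a c); case: (e c b); case: (e d a).
Qed.

Lemma sim_swp (T : finType) (e : rel T) (es : symmetric e) p q :
  sim e p q -> sim e (swp p) (swp q).
Proof.
case=> s [H P L]; exists (map swp s); split.
- by rewrite size_map.
- rewrite path_map; apply: sub_path P => a b /=.
  by rewrite /walk_step /= (Lam_swp es) => /and3P[-> -> ->].
- subst q; by elim: s {H P} p => //= z s IH p.
Qed.

Lemma sim_refl (T : finType) (e : rel T) (er : forall v, e v v) p :
  p.1 != p.2 -> sim e p p.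
Proof.
move=> H; exists [:: p]; split => //=.
by rewrite /walk_step !er /Lam H eqxx.
Qed.

Lemma sim_step (T : finType) (e : rel T) p q :
  p.1 != p.2 -> q.1 != q.2 -> e p.1 q.1 -> e p.2 q.2 -> ~~ e p.1 q.2 -> ~~ e p.2 q.1 ->
  sim e p q.
Proof.
move=> H1 H2 H3 H4 H5 H6; exists [:: q]; split => //=.
by rewrite /walk_step H3 H4 /Lam H1 H2 H5 H6 H3 H4 orbT.
Qed.


Lemma disj_neq (T : finType) (u u' v v' : T) :
  [set u; u'] :&: [set v; v'] = set0 ->
  [/\ u != v, u != v', u' != v & u' != v'].
Proof.
move=> H.
have F : forall z, z \in [set u; u'] -> z \in [set v; v'] -> False.
  move=> z H1 H2; have : z \in [set u; u'] :&: [set v; v'] by rewrite inE H1 H2.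
  by rewrite H inE.
split; apply/negP => /eqP E; [apply: (F u)|apply: (F u)|apply: (F u')|apply: (F u')];
  by rewrite !inE ?E eqxx ?orbT.
Qed.

Lemma neq_disj (T : finType) (u u' v v' : T) :
  u != v -> u != v' -> u' != v -> u' != v' ->
  [set u; u'] :&: [set v; v'] = set0.
Proof.
move=> H1 H2 H3 H4; apply/setP => z; rewrite !inE.
case: (eqVneq z u) => [->|_]; first by rewrite (negbTE H1) (negbTE H2).
case: (eqVneq z u') => [->|_] //=; by rewrite (negbTE H3) (negbTE H4).
Qed.

Lemma deg3_gen (T : finType) (e : rel T) (H : rel 'I_4)
  (Hh : forall i j1 j2 j3 : 'I_4,
     ~~ [&& j1 != j2, j1 != j3, j2 != j3, H i j1, H i j2 & H i j3])
  S z n1 n2 n3 :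
  induces e S H -> z \in S -> n1 \in S -> n2 \in S -> n3 \in S ->
  z != n1 -> z != n2 -> z != n3 -> n1 != n2 -> n1 != n3 -> n2 != n3 ->
  e z n1 -> e z n2 -> e z n3 -> False.
Proof.
case=> f [finj fim fe].
rewrite -fim => /imsetP[i _ ->] /imsetP[j1 _ ->] /imsetP[j2 _ ->] /imsetP[j3 _ ->].
have nq : forall a b : 'I_4, f a != f b -> a != b.
  by move=> a b; apply: contraNneq => ->.
move=> d1 d2 d3 d12 d13 d23.
rewrite !fe ?nq // => h1 h2 h3.
by move: (Hh i j1 j2 j3); rewrite !nq // h1 h2 h3.
Qed.

Lemma P4_deg (i j1 j2 j3 : 'I_4) :
  ~~ [&& j1 != j2, j1 != j3, j2 != j3, P4_pat i j1, P4_pat i j2 & P4_pat i j3].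
Proof.
case: i => [[|[|[|[|?]]]] ?] //; case: j1 => [[|[|[|[|?]]]] ?] //; case: j2 => [[|[|[|[|?]]]] ?] //;
case: j3 => [[|[|[|[|?]]]] ?] //.
Qed.
Lemma C4_deg (i j1 j2 j3 : 'I_4) :
  ~~ [&& j1 != j2, j1 != j3, j2 != j3, C4_pat i j1, C4_pat i j2 & C4_pat i j3].
Proof.
case: i => [[|[|[|[|?]]]] ?] //; case: j1 => [[|[|[|[|?]]]] ?] //; case: j2 => [[|[|[|[|?]]]] ?] //;
case: j3 => [[|[|[|[|?]]]] ?] //.
Qed.
Lemma K2_deg (i j1 j2 j3 : 'I_4) :
  ~~ [&& j1 != j2, j1 != j3, j2 != j3, twoK2_pat i j1, twoK2_pat i j2 & twoK2_pat i j3].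
Proof.
case: i => [[|[|[|[|?]]]] ?] //; case: j1 => [[|[|[|[|?]]]] ?] //; case: j2 => [[|[|[|[|?]]]] ?] //;
case: j3 => [[|[|[|[|?]]]] ?] //.
Qed.

Lemma mk_ind (T : finType) (e : rel T) (H : rel 'I_4) (a b c d : T) (S : {set T}) :
  uniq [:: a; b; c; d] ->
  (forall z, (z \in S) = [|| z == a, z == b, z == c | z == d]) ->
  (forall i j : 'I_4, i != j -> e (nth a [:: a; b; c; d] i) (nth a [:: a; b; c; d] j) = H i j) ->
  induces e S H.
Proof.
move=> U HS HE; exists (fun i : 'I_4 => nth a [:: a; b; c; d] i); split => //.
- move=> i j /eqP; rewrite nth_uniq // => /eqP; exact: val_inj.
- apply/setP => z; rewrite HS; apply/imsetP/idP.
    case=> i _ ->; case: i => [[|[|[|[|?]]]] ?] //=; by rewrite eqxx ?orbT.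
  case/or4P => /eqP ->.
  + by exists (@Ordinal 4 0 isT).
  + by exists (@Ordinal 4 1 isT).
  + by exists (@Ordinal 4 2 isT).
  + by exists (@Ordinal 4 3 isT).
Qed.


Ltac side es := solve [ rewrite !inE eqxx ?orbT // | done | rewrite eq_sym; done | rewrite es; done ].

Lemma avoids_match (T : finType) (e : rel T) (er : forall v, e v v) (es : symmetric e)
  (u u' v v' : T) :
  avoids e (u,u') (v,v') ->
  [/\ e u u', e v v', [/\ u != v, u != v', u' != v & u' != v'] &
     (~~ e u v' && ~~ e u' v) || (~~ e u v && ~~ e u' v')].
Proof.
case=> h1 h2 hd hc; split => //; first exact: disj_neq.
case/disj_neq: hd => d1 d2 d3 d4.
case: hc.
- by case=> <- <- h; rewrite h.
- by case=> <- _ h h'; rewrite h h'.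
- by case=> _ <- h h'; rewrite h h'.
case=> n1 n2 /= H.
case: (boolP ((~~ e u v' && ~~ e u' v) || (~~ e u v && ~~ e u' v'))) => // Hn.
exfalso.
have D : forall z m1 m2 m3, z \in [set u; u'; v; v'] -> m1 \in [set u; u'; v; v'] ->
   m2 \in [set u; u'; v; v'] -> m3 \in [set u; u'; v; v'] ->
   z != m1 -> z != m2 -> z != m3 -> m1 != m2 -> m1 != m3 -> m2 != m3 ->
   e z m1 -> e z m2 -> e z m3 -> False.
  move=> z m1 m2 m3; case: H => H.
  - exact: (deg3_gen K2_deg H).
  - exact: (deg3_gen P4_deg H).
  - exact: (deg3_gen C4_deg H).
move: Hn; rewrite negb_or !negb_and !negbK => /andP[/orP[] a1 /orP[] a2].
- by apply: (D u u' v v'); side es.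
- by apply: (D v' v u u'); side es.
- by apply: (D v v' u' u); side es.
- by apply: (D u' u v v'); side es.
Qed.

Ltac close_e es := solve [ done | apply/negbTE; done | rewrite es; done
                         | rewrite es; apply/negbTE; done ].
Ltac edge_tac es :=
  let i := fresh in let j := fresh in
  move=> i j; case: i => [[|[|[|[|?]]]] ?] //; case: j => [[|[|[|[|?]]]] ?] //= _;
  close_e es.
Ltac mem_tac := let z := fresh in move=> z; rewrite !inE;
  by case: (z == _); case: (z == _); case: (z == _); case: (z == _).
Ltac uniq_tac := rewrite /= !inE !negb_or; repeat (apply/andP; split);
  solve [ done | rewrite eq_sym; done ].

Lemma avoids_of (T : finType) (e : rel T) (er : forall v, e v v) (es : symmetric e)
  (u u' v v' : T) :
  e u u' -> e v v' -> u != v -> u != v' -> u' != v -> u' != v' ->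
  (~~ e u v' && ~~ e u' v) || (~~ e u v && ~~ e u' v') -> avoids e (u,u') (v,v').
Proof.
move=> h1 h2 d1 d2 d3 d4 hm; split => //; first exact: neq_disj.
case: (eqVneq u u') => [Eu|nu]; case: (eqVneq v v') => [Ev|nv].
- rewrite -Eu -Ev in hm; constructor 1; split => //.
  by case/orP: hm => /andP[].
- rewrite -Eu in hm; constructor 2; split => //;
  by case/orP: hm => /andP[].
- rewrite -Ev in hm; constructor 3; split => //;
  by case/orP: hm => /andP[].
constructor 4; split => // S.
case/orP: hm => /andP[a1 a2].
- case: (boolP (e u v)) => b1; case: (boolP (e u' v')) => b2.
  + constructor 3; apply: (mk_ind (a := u) (b := u') (c := v') (d := v)).
    * by uniq_tac.
    * by mem_tac.
    * by edge_tac es.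
  + constructor 2; apply: (mk_ind (a := u') (b := u) (c := v) (d := v')).
    * by uniq_tac.
    * by mem_tac.
    * by edge_tac es.
  + constructor 2; apply: (mk_ind (a := u) (b := u') (c := v') (d := v)).
    * by uniq_tac.
    * by mem_tac.
    * by edge_tac es.
  + constructor 1; apply: (mk_ind (a := u) (b := u') (c := v) (d := v')).
    * by uniq_tac.
    * by mem_tac.
    * by edge_tac es.
- case: (boolP (e u v')) => b1; case: (boolP (e u' v)) => b2.
  + constructor 3; apply: (mk_ind (a := u) (b := u') (c := v) (d := v')).
    * by uniq_tac.
    * by mem_tac.
    * by edge_tac es.
  + constructor 2; apply: (mk_ind (a := u') (b := u) (c := v') (d := v)).
    * by uniq_tac.
    * by mem_tac.
    * by edge_tac es.
  + constructor 2; apply: (mk_ind (a := u) (b := u') (c := v) (d := v')).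
    * by uniq_tac.
    * by mem_tac.
    * by edge_tac es.
  + constructor 1; apply: (mk_ind (a := u) (b := u') (c := v) (d := v')).
    * by uniq_tac.
    * by mem_tac.
    * by edge_tac es.
Qed.


Definition pt {T : Type} (a : T * T) (s : bool) : T := if s then a.2 else a.1.

Definition good (T : finType) (e : rel T) (a b : T * T) (s t : bool) : bool :=
  [&& pt a s != pt b t, pt a (~~ s) != pt b (~~ t),
      ~~ e (pt a s) (pt b (~~ t)) & ~~ e (pt a (~~ s)) (pt b t)].

Definition Gs (T : finType) (e : rel T) (a b : T * T) (z : T * T) : Prop :=
  exists s t, good e a b s t /\ z = (pt a s, pt b t).

Lemma bool_cases (s s' : bool) : s' = s \/ s' = ~~ s.
Proof. by case: s; case: s'; auto. Qed.

Lemma pt_edge (T : finType) (e : rel T) (es : symmetric e) (a : T * T) s :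
  e a.1 a.2 -> e (pt a s) (pt a (~~ s)).
Proof. by case: s => //= h; rewrite es. Qed.

Lemma good_partner (T : finType) (e : rel T) a b s t :
  good e a b s t -> good e a b (~~ s) (~~ t).
Proof. by case/and4P => h1 h2 h3 h4; rewrite /good !negbK h1 h2 h3 h4. Qed.

Ltac ct er es := solve [ done | apply: er | apply: (pt_edge es); done
  | rewrite es; done | rewrite es negbK; done | rewrite negbK; done ].

Lemma Gs_conn (T : finType) (e : rel T) (er : forall v, e v v) (es : symmetric e)
  (a b z z' : T * T) :
  e a.1 a.2 -> e b.1 b.2 -> Gs e a b z -> Gs e a b z' -> sim e z z'.
Proof.
move=> ea eb [s [t [g ->]]] [s' [t' [g' ->]]].
move: (g) => /and4P[g1 g2 g3 g4].
case: (bool_cases s s') => -> in g' *; case: (bool_cases t t') => -> in g' *.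
- exact: sim_refl.
- move: g' => /and4P[h1 h2 h3 h4]; rewrite negbK in h3 h4.
  by apply: sim_step => /=; ct er es.
- move: g' => /and4P[h1 h2 h3 h4]; rewrite negbK in h3 h4.
  by apply: sim_step => /=; ct er es.
- move: g' => /and4P[h1 h2 h3 h4]; rewrite !negbK in h3 h4.
  by apply: sim_step => /=; ct er es.
Qed.

Lemma avoid_good (T : finType) (e : rel T) (er : forall v, e v v) (es : symmetric e)
  (a b : T * T) :
  avoids e a b -> good e a b false false \/ good e a b false true.
Proof.
case: a b => u u' [v v'] /(avoids_match er es) [_ _ [d1 d2 d3 d4]].
case/orP => /andP[n1 n2]; [left|right]; by rewrite /good /= ?d1 ?d2 ?d3 ?d4 ?n1 ?n2.
Qed.

Lemma avoid_Gs (T : finType) (e : rel T) (er : forall v, e v v) (es : symmetric e)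
  (a b : T * T) : avoids e a b -> exists z, Gs e a b z.
Proof.
move=> A; case: (avoid_good er es A) => g.
- by exists (pt a false, pt b false), false, false.
- by exists (pt a false, pt b true), false, true.
Qed.

Lemma avoid_edges (T : finType) (e : rel T) (er : forall v, e v v) (es : symmetric e)
  (a b : T * T) : avoids e a b -> e a.1 a.2 /\ e b.1 b.2.
Proof. by case: a b => u u' [v v'] /(avoids_match er es) [? ? _ _]. Qed.

Lemma link_L (T : finType) (e : rel T) (er : forall v, e v v) (es : symmetric e)
  (a : T * T) b1 b2 b3 :
  avoids e a (b1, b2) -> avoids e a (b2, b3) ->
  exists z z', [/\ Gs e a (b1, b2) z, Gs e a (b2, b3) z' & sim e z z'].
Proof.
move=> A1 A2.
have [s g] : exists s, good e a (b1, b2) s true.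
  by case: (avoid_good er es A1) => g; [exists true; exact: (good_partner g) | exists false].
have [s' g'] : exists s', good e a (b2, b3) s' false.
  by case: (avoid_good er es A2) => g'; [exists false | exists true; exact: (good_partner g')].
exists (pt a s, b2), (pt a s', b2); split.
- by exists s, true.
- by exists s', false.
move: (g) (g') => /and4P[g1 g2 g3 g4] /and4P[h1 h2 h3 h4].
have ea := (avoid_edges er es A1).1.
case: (bool_cases s s') => E; subst s'; first exact: sim_refl.
rewrite negbK /= in h4; rewrite /= in g4.
by apply: sim_step => /=; ct er es.
Qed.


Lemma pt_swp {T : Type} (b : T * T) t : pt (b.2, b.1) t = pt b (~~ t).
Proof. by case: t. Qed.

Lemma same_edge_sym (T : finType) (b b' : T * T) : same_edge b b' -> same_edge b' b.
Proof.
case: b b' => a1 a2 [b1 b2]; rewrite /same_edge /= !xpair_eqE.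
case/orP => /andP[/eqP -> /eqP ->]; by rewrite !eqxx ?orbT.
Qed.

Lemma Gs_same (T : finType) (e : rel T) (a b b' z : T * T) :
  same_edge b b' -> Gs e a b z -> Gs e a b' z.
Proof.
case/orP => /eqP ->; first by [].
case=> s [t [g ->]]; exists s, (~~ t); split; last by rewrite pt_swp.
by move: g; rewrite /good !pt_swp !negbK.
Qed.

Lemma Gs_swp (T : finType) (e : rel T) (es : symmetric e) (a b z : T * T) :
  Gs e a b z -> Gs e b a (swp z).
Proof.
case=> s [t [g ->]]; exists t, s; split => //.
move: g => /and4P[g1 g2 g3 g4].
by rewrite /good eq_sym g1 eq_sym g2 es g4 es g3.
Qed.

Lemma walkA (T : finType) (e : rel T) (er : forall v, e v v) (es : symmetric e)
  (a : T * T) w0 ws :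
  0 < size ws -> avoids_walk e a w0 ws ->
  forall z z', Gs e a (first_edge w0 ws) z -> Gs e a (last_edge w0 ws) z' -> sim e z z'.
Proof.
elim: ws w0 => // w1 ws IH w0 _ A z z'.
have A1 : avoids e a (w0, w1) by apply: A; rewrite /walk_edges /= mem_head.
case: ws IH A => [|w2 ws] IH A.
- rewrite /first_edge /last_edge /walk_edges /= => G1 G2.
  have [ea eb] := avoid_edges er es A1.
  exact: (Gs_conn er es ea eb G1 G2).
have A2 : avoids_walk e a w1 (w2 :: ws).
  by move=> c Hc; apply: A; rewrite /walk_edges /= inE Hc orbT.
have A12 : avoids e a (w1, w2) by apply: A2; rewrite /walk_edges /= mem_head.
rewrite /first_edge /last_edge /walk_edges /= => G1 G2.
have [z1 [z2 [H1 H2 S12]]] := link_L er es A1 A12.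
have [ea eb] := avoid_edges er es A1.
apply: (sim_trans (Gs_conn er es ea eb G1 H1)).
apply: (sim_trans S12).
by apply: (IH w1 isT A2) => //.
Qed.


Lemma ast_inv (T : finType) (e : rel T) (er : forall v, e v v) (es : symmetric e)
  k (x y : nat -> T) :
  weak_edge_asteroid e k x y -> exists u v, invertible_pair e u v.
Proof.
case=> k1 Hedge Hw.
set N := k.*2.+1.
pose E j := (x j, y j).
have key : forall i, i < N ->
   (exists z, Gs e (E i) (E ((i + k) %% N)) z) /\
   (forall z z', Gs e (E i) (E ((i + k) %% N)) z ->
                 Gs e (E i) (E ((i + k + 1) %% N)) z' -> sim e z z').
  move=> i Hi; have := Hw i Hi; cbv zeta; case=> w0 [ws [W F L A]].
  case/andP: W => Ws _.
  split.
  - case: ws Ws F L A => // w1 ws _ F L A.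
    have A1 : avoids e (x i, y i) (w0, w1) by apply: A; rewrite /walk_edges /= mem_head.
    have [z Gz] := avoid_Gs er es A1.
    by exists z; apply: (Gs_same F).
  - move=> z z' G1 G2.
    apply: (walkA er es Ws A).
    + exact: (Gs_same (same_edge_sym F)).
    + exact: (Gs_same (same_edge_sym L)).
pose idx n := (n * k.+1) %% N.
have idxlt : forall n, idx n < N by move=> n; rewrite ltn_pmod.
have idxS : forall n, idx n.+1 = (idx n + k + 1) %% N.
  by move=> n; rewrite /idx -addnA modnDml mulSn addnC addn1.
have idxSk : forall n, (idx n.+1 + k) %% N = idx n.
  move=> n; rewrite idxS modnDml.
  have -> : idx n + k + 1 + k = idx n + N by rewrite /N -addnn; lia.
  by rewrite modnDr modn_small.
pose Q n z := Gs e (E (idx n)) (E ((idx n + k) %% N)) z.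
have link : forall n z' z'', Q n z' -> Q n.+1 z'' -> sim e z' (swp z'').
  move=> n z' z'' H1 H2; rewrite /Q idxSk idxS in H2.
  have H3 := Gs_swp es H2.
  by apply: ((key _ (idxlt n)).2 _ _ H1 H3).
have ind : forall n z z', Q 0 z -> Q n z' -> sim e z (if odd n then swp z' else z').
  move=> n; elim: n => [|n IH] z z' H0 Hn.
  - rewrite /=; apply: (Gs_conn er es _ _ H0 Hn); apply: Hedge; exact: ltn_pmod.
  - have [z1 Hz1] := (key _ (idxlt n)).1.
    have S1 := IH _ _ H0 Hz1.
    have S2 := link _ _ _ Hz1 Hn.
    rewrite /=; case: (odd n) S1 => /= S1.
    + apply: (sim_trans S1); have := sim_swp es S2; by rewrite swpK.
    + exact: (sim_trans S1 S2).
have [z Hz] := (key _ (idxlt 0)).1.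
have HzN : Q N z.
  have E0 : idx N = idx 0 by rewrite /idx ?modnMr ?modnMl ?mul0n ?mod0n.
  by rewrite /Q E0.
have H := ind N z z Hz HzN.
have oN : odd N by rewrite /N /= odd_double.
rewrite oN in H.
case: Hz => s [t [g Ez]].
exists z.1, z.2; split.
- by rewrite Ez /=; case/and4P: g => g1 *; exact: g1.
- by move: H; case: (z).
Qed.


Lemma nadj_neq (T : finType) (e : rel T) (er : forall v, e v v) (a b : T) :
  ~~ e a b -> a != b.
Proof. by apply: contraNneq => ->; rewrite er. Qed.

Lemma same_eq (T : finType) (a b : T * T) : a = b -> same_edge a b.
Proof. by move=> ->; rewrite /same_edge eqxx. Qed.

Ltac wrw w X Y := (have -> : w X = w Y by apply: f_equal; lia).
Ltac wpr w H4 X Y := (have -> : w X = w Y by rewrite -(H4 Y); apply: f_equal; lia).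

Lemma from_cycle (T : finType) (e : rel T) (er : forall v, e v v) (es : symmetric e)
  (k : nat) (w : nat -> T) :
  0 < k ->
  (forall n, e (w n) (w n.+1)) ->
  (forall n, ~~ e (w n) (w (n + k.+2))) ->
  (forall n, w n != w (n + k.+1)) ->
  (forall n, w (n + k.*2.+2) = w n) ->
  exists (k : nat) (x y : nat -> T), weak_edge_asteroid e k x y.
Proof.
move=> k0 H1 H2 H3 H4.
have wp : forall n n', n = n' + k.*2.+2 -> w n = w n' by move=> n n' ->.
have wq : forall n n', n = n' -> w n = w n' by move=> n n' ->.
have N2 : forall n, ~~ e (w n.+1) (w (n + k.+1)).
  move=> n; rewrite es; move: (H2 (n + k.+1)).
  by rewrite (wp (n + k.+1 + k.+2) n.+1) //; lia.
have N3 : forall n, ~~ e (w n) (w (n + k)).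
  move=> n; rewrite es; move: (H2 (n + k)).
  by rewrite (wp (n + k + k.+2) n) //; lia.
have av1 : forall j, avoids e (w j, w j.+1) (w (j + k), w (j + k.+1)).
  move=> j; apply: (avoids_of er es);
  [ exact: H1
  | by rewrite (wq (j + k.+1) (j + k).+1) ?H1 //; lia
  | exact: (nadj_neq er (N3 j))
  | exact: H3
  | apply: contraNneq (N3 j) => <-; exact: H1
  | exact: (nadj_neq er (N2 j))
  | by rewrite N3 N2 orbT ].
have av2 : forall j, avoids e (w j, w j.+1) (w (j + k.+1), w (j + k.+2)).
  move=> j; apply: (avoids_of er es);
  [ exact: H1
  | by rewrite (wq (j + k.+2) (j + k.+1).+1) ?H1 //; lia
  | exact: H3
  | exact: (nadj_neq er (H2 j))
  | exact: (nadj_neq er (N2 j))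
  | by rewrite (wq (j + k.+2) (j.+1 + k.+1)) ?H3 //; lia
  | by rewrite H2 N2 ].
have av3 : forall j, avoids e (w j, w j.+1) (w (j + k.+2), w (j + k.+3)).
  move=> j; apply: (avoids_of er es);
  [ exact: H1
  | by rewrite (wq (j + k.+3) (j + k.+2).+1) ?H1 //; lia
  | exact: (nadj_neq er (H2 j))
  | (have -> : w (j + k.+3) = w (j.+1 + k.+2) by apply: wq; lia);
    apply: contraNneq (H2 j.+1) => <-; rewrite es; exact: H1
  | by rewrite (wq (j + k.+2) (j.+1 + k.+1)) ?H3 //; lia
  | by rewrite (wq (j + k.+3) (j.+1 + k.+2)) ?(nadj_neq er (H2 j.+1)) //; lia
  | by rewrite H2 (wq (j + k.+3) (j.+1 + k.+2)) ?H2 ?orbT //; lia ].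
exists k; exists w; exists (fun n => w n.+1).
split => //.
move=> i Hi; cbv zeta.
have [ilt|ige] := ltnP i k.
-
  rewrite (modn_small (_ : i + k < k.*2.+1)); last by lia.
  rewrite (modn_small (_ : i + k + 1 < k.*2.+1)); last by lia.
  exists (w (i + k)), [:: w (i + k.+1); w (i + k.+2)]; split.
  + rewrite /is_walk /=.
    wrw w (i + k.+1) (i + k).+1; wrw w (i + k.+2) (i + k).+2.
    by rewrite !H1.
  + apply: same_eq; rewrite /first_edge /=.
    by wrw w (i + k.+1) (i + k).+1.
  + apply: same_eq; rewrite /last_edge /=.
    wrw w (i + k.+1) (i + k + 1); by wrw w (i + k.+2) (i + k + 1).+1.
  + move=> c; rewrite /walk_edges /= !inE => /orP[] /eqP ->; [exact: av1 | exact: av2].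
have [iek|igt] := eqVneq i k.
-
  subst i.
  rewrite (modn_small (_ : k + k < k.*2.+1)); last by lia.
  rewrite (_ : k + k + 1 = k.*2.+1); last by lia.
  rewrite modnn.
  exists (w (k + k)), [:: w (k + k.+1); w (k + k.+2); w (k + k.+3)]; split.
  + rewrite /is_walk /=.
    wrw w (k + k.+1) (k + k).+1; wrw w (k + k.+2) (k + k).+2; wrw w (k + k.+3) (k + k).+3.
    by rewrite !H1.
  + apply: same_eq; rewrite /first_edge /=.
    by wrw w (k + k.+1) (k + k).+1.
  + apply: same_eq; rewrite /last_edge /=.
    wpr w H4 (k + k.+2) 0; by wpr w H4 (k + k.+3) 1.
  + move=> c; rewrite /walk_edges /= !inE => /orP[/eqP ->|/orP[] /eqP ->];
      [exact: av1 | exact: av2 | exact: av3].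
-
  have ikl : k < i by rewrite ltn_neqAle eq_sym igt ige.
  rewrite (_ : i + k = (i - k.+1) + k.*2.+1); last by lia.
  rewrite modnDr (modn_small (_ : i - k.+1 < k.*2.+1)); last by lia.
  rewrite (_ : i - k.+1 + k.*2.+1 + 1 = (i - k) + k.*2.+1); last by lia.
  rewrite modnDr (modn_small (_ : i - k < k.*2.+1)); last by lia.
  exists (w (i + k.+1)), [:: w (i + k.+2); w (i + k.+3)]; split.
  + rewrite /is_walk /=.
    wrw w (i + k.+2) (i + k.+1).+1; wrw w (i + k.+3) (i + k.+1).+2.
    by rewrite !H1.
  + apply: same_eq; rewrite /first_edge /=.
    wpr w H4 (i + k.+1) (i - k.+1); by wpr w H4 (i + k.+2) (i - k.+1).+1.
  + apply: same_eq; rewrite /last_edge /=.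
    wpr w H4 (i + k.+2) (i - k); by wpr w H4 (i + k.+3) (i - k).+1.
  + move=> c; rewrite /walk_edges /= !inE => /orP[] /eqP ->; [exact: av2 | exact: av3].
Qed.


Definition sstep (T : finType) (e : rel T) (p q : T * T) := walk_step e p q && (p != q).

Lemma destutter (T : finType) (e : rel T) p s :
  path (walk_step e) p s -> exists s', path (sstep e) p s' /\ last p s' = last p s.
Proof.
elim: s p => [|q s IH] p /=; first by move=> _; exists [::].
case/andP => hpq hs; have [s' [h1 h2]] := IH q hs.
case: (eqVneq p q) => [E|npq]; first by subst q; exists s'.
by exists (q :: s'); rewrite /= /sstep hpq npq h1 h2.
Qed.

Definition SL (T : finType) (e : rel T) (p q : T * T) :=
  [&& p.1 != p.2, e p.1 q.1, e p.2 q.2, ~~ e p.1 q.2 & ~~ e p.2 q.1].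

Lemma sstep_SL (T : finType) (e : rel T) p q : sstep e p q -> SL e p q.
Proof.
rewrite /sstep /walk_step /Lam => /andP[/and3P[h1 h2 /and3P[d1 d2 /orP[/eqP E|/and4P[_ _ n1 n2]]]] npq].
  by rewrite E eqxx in npq.
by rewrite /SL d1 h1 h2 n1 n2.
Qed.

Lemma SL_swp (T : finType) (e : rel T) p q : SL e p q -> SL e (swp p) (swp q).
Proof.
by case/and5P => h1 h2 h3 h4 h5; rewrite /SL /swp /= eq_sym h1 h2 h3 h4 h5.
Qed.

Definition swn {T : Type} (q : nat) (z : T * T) := if odd q then swp z else z.

Lemma build (T : finType) (e : rel T) (er : forall v, e v v) (es : symmetric e) (u v : T) :
  invertible_pair e u v ->
  exists (k : nat) (w : nat -> T), [/\ 0 < k,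
  (forall n, e (w n) (w n.+1)),
  (forall n, ~~ e (w n) (w (n + k.+2))),
  (forall n, w n != w (n + k.+1)) &
  (forall n, w (n + k.*2.+2) = w n)].
Proof.
case=> nuv [s [_ Ps Ls]].
have [s' [P' L']] := destutter Ps; rewrite Ls in L'.
set m := size s'.
have m1 : 1 < m.
  case: s' @m P' L' => [|q [|q' s']] //=.
  - by move=> _ [E _]; rewrite E eqxx in nuv.
  - rewrite andbT => /sstep_SL /and5P[_ _ _ h _] E; subst q.
    by rewrite /= er in h.
have m0 : 0 < m by apply: ltnW.
pose W r := nth (u, v) ((u, v) :: s') r.
have WS : forall r, r < m -> SL e (W r) (W r.+1).
  move=> r hr; apply: sstep_SL; exact: (pathP (u, v) P').
have Wm : W m = (v, u).
  by have := nth_last (u, v) ((u, v) :: s'); rewrite /= L'.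
pose P n := swn (n %/ m) (W (n %% m)).
have Peq : forall q r, r < m -> P (q * m + r) = swn q (W r).
  by move=> q r hr; rewrite /P divnMDl // divn_small // addn0 modnMDl modn_small.
have swS : forall q (z : T * T), swn q.+1 z = swp (swn q z).
  by move=> q z; rewrite /swn /=; case: (odd q); rewrite ?swpK.
have PS : forall n, SL e (P n) (P n.+1).
  move=> n; move: (ltn_pmod n m0) (divn_eq n m).
  move: (n %/ m) (n %% m) => q r rlt ->.
  rewrite Peq //.
  case: (ltnP r.+1 m) => hr.
  - rewrite -addnS Peq //; have := WS r rlt.
    by rewrite /swn; case: (odd q) => // /SL_swp.
  - have rm : r.+1 = m by apply/eqP; rewrite eqn_leq hr rlt.
    rewrite -addnS rm (_ : q * m + m = q.+1 * m + 0); last by rewrite addn0 mulSn addnC.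
    rewrite Peq // swS; have := WS r rlt; rewrite rm Wm.
    by rewrite /swn; case: (odd q) => // /SL_swp.
have PM : forall n, P (n + m) = swp (P n).
  move=> n; move: (ltn_pmod n m0) (divn_eq n m).
  move: (n %/ m) (n %% m) => q r rlt ->.
  rewrite Peq // (_ : q * m + r + m = q.+1 * m + r); last by rewrite mulSn; lia.
  by rewrite Peq // swS.
exists m.-1, (fun n => (P n).1); split.
- by rewrite -subn1 subn_gt0.
- by move=> n; case/and5P: (PS n).
- move=> n; rewrite (_ : n + m.-1.+2 = n.+1 + m); last by lia.
  by rewrite PM /swp /=; case/and5P: (PS n).
- move=> n; rewrite (_ : n + m.-1.+1 = n + m); last by lia.
  by rewrite PM /swp /=; case/and5P: (PS n).
- move=> n; rewrite (_ : n + (m.-1).*2.+2 = n + m + m); last by lia.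
  by rewrite !PM swpK.
Qed.

Unset Implicit Arguments.

Theorem theorem6 (T : finType) (e : rel T)
    (e_refl : forall v : T, e v v) (e_sym : symmetric e) :
  (exists u v : T, invertible_pair e u v) <->
  (exists (k : nat) (x y : nat -> T), weak_edge_asteroid e k x y).
Proof.
split.
- case=> u [v H].
  have [k [w [k0 H1 H2 H3 H4]]] := build e_refl e_sym H.
  exact: (from_cycle e_refl e_sym k0 H1 H2 H3 H4).
- case=> k [x [y H]]; exact: (ast_inv e_refl e_sym H).
Qed.
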